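(* For every base $\mathscr{B}$, finite multisets of atoms $P=[p_1,\dots,p_n]$ and $S$, and atom $q$, the following are equivalent: (1) $P,S\vdash_{\mathscr{B}}q$; (2) for every base $\mathscr{X}\supseteq\mathscr{B}$ and all finite multisets of atoms $T_1,\dots,T_n$, if $T_i\vdash_{\mathscr{X}}p_i$ for all $i=1,\dots,n$, then $T_1,\dots,T_n,S\vdash_{\mathscr{X}}q$.
   Context: Fix a countably infinite set $\mathbb{A}$ of atoms; multisets are finite and ''$,$'' denotes multiset union. An atomic rule is $(P_1\triangleright p_1,\dots,P_n\triangleright p_n)\Rightarrow p$ ($n\ge0$) with $P_i$ finite multisets of atoms and $p_i,p$ atoms; a base is a set of atomic rules, and $\mathscr{X}\supseteq\mathscr{B}$ means $\mathscr{X}$ contains all rules of $\mathscr{B}$. Derivability $\vdash_{\mathscr{B}}$ is the least relation between finite multisets of atoms and atoms such that (Ref) $[p]\vdash_{\mathscr{B}}p$; (App) if $(P_1\triangleright p_1,\dots,P_n\triangleright p_n)\Rightarrow p\in\mathscr{B}$ and $S_i,P_i\vdash_{\mathscr{B}}p_i$ for $i=1,\dots,n$, then $S_1,\dots,S_n\vdash_{\mathscr{B}}p$. *)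

(* Defs.v *)
From mathcomp Require Import all_boot finmap multiset.
Set Implicit Arguments. Unset Strict Implicit. Unset Printing Implicit Defensive.
Local Open Scope fset_scope.
Local Open Scope mset_scope.

Definition atom := nat.
Definition mctx := {mset atom}.

(* An atomic rule (P_1 |> p_1, ..., P_n |> p_n) => p :
   a list of premises (P_i, p_i) and a conclusion p. *)
Definition rule := (seq (mctx * atom) * atom)%type.

Definition base := rule -> Prop.

Definition base_ext (X B : base) : Prop := forall r, B r -> X r.

Definition msum (Ss : seq mctx) : mctx := foldr (fun A B => A `+` B) mset0 Ss.

Inductive derivable (B : base) : mctx -> atom -> Prop :=
| der_ref (p : atom) : derivable B [mset p] p
| der_app (prems : seq (mctx * atom)) (p : atom) (Ss : seq mctx) :
    B (prems, p) ->
    size Ss = size prems ->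
    (forall i, i < size prems ->
       derivable B (nth mset0 Ss i `+` (nth (mset0, 0) prems i).1)
                   (nth (mset0, 0) prems i).2) ->
    derivable B (msum Ss) p.

(* Main.v *)
Require Import Defs.
From mathcomp Require Import all_boot finmap multiset.
From mathcomp Require Import zify.
Local Open Scope fset_scope.
Local Open Scope mset_scope.

Ltac mlia :=
  repeat match goal with H : context[@fun_of_fsfun _ _ _ _ _] |- _ =>
    match type of H with
    | forall _, _ => fail 1
    | _ => revert H end end;
  repeat match goal with |- context [@fun_of_fsfun ?K ?V ?d ?f ?x] =>
    let n := fresh "n" in move: (@fun_of_fsfun K V d f x : nat) => n end;
  intros; lia.

Lemma mono (B X : base) G q : derivable B G q -> base_ext X B -> derivable X G q.
Proof.
move=> D HX; elim: D => [p|prems p Ss HB Hs _ IH]; first exact: der_ref.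
apply: der_app; [exact: HX HB | exact: Hs |].
by move=> i Hi; apply: IH.
Qed.

Lemma msumE Ss a : (msum Ss) a = sumn (map (fun A : mctx => A a) Ss).
Proof. by elim: Ss => [|A Ss IH] /=; rewrite ?mset0E // msetE2 IH. Qed.

Lemma msum_pos Ss (a : atom) : 0 < (msum Ss) a ->
  exists2 j, j < size Ss & 0 < (nth mset0 Ss j) a.
Proof.
elim: Ss => [|A Ss IH] /=; first by rewrite mset0E.
rewrite msetE2; case: (posnP (A a)) => HA.
  rewrite HA add0n => /IH [j Hj Hp]; by exists j.+1.
by move=> _; exists 0.
Qed.

Lemma msum_set Ss j A a : j < size Ss ->
  ((msum (set_nth mset0 Ss j A)) a + (nth mset0 Ss j) a = (msum Ss) a + A a)%N.
Proof.
elim: Ss j => [|C Ss IH] [|j] //=; rewrite !msetE2 => Hj.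
  mlia.
have := IH j Hj; mlia.
Qed.

Lemma cut X G p T q : derivable X (G `+` [mset p]) q -> derivable X T p ->
  derivable X (G `+` T) q.
Proof.
move=> D DT; remember (G `+` [mset p]) as D0 eqn:E.
elim: D G E => [p'|prems p' Ss HB Hs Hd IH] G E.
  have Hp : p' = p.
    move/msetP: E => /(_ p); rewrite msetE2 !msetnE eqxx.
    by case: eqP => // _; mlia.
  subst p'.
  have -> : G = mset0.
    apply/msetP => a; move/msetP: E => /(_ a); rewrite msetE2 !msetnE mset0E.
    case: eqP => _; mlia.
  by rewrite mset0D.
have : 0 < (msum Ss) p by rewrite E msetE2 msetnE eqxx; mlia.
case/msum_pos => j Hj Hpj.
set A := (nth mset0 Ss j `\ p) `+` T.
have -> : G `+` T = msum (set_nth mset0 Ss j A).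
  apply/msetP => a; have := msum_set Ss j A a Hj.
  move/msetP: E => /(_ a); rewrite /A !msetE2 !msetnE.
  case: eqP => [->|_]; mlia.
apply: (der_app HB); first by rewrite size_set_nth; mlia.
move=> i Hi; rewrite nth_set_nth /=; case: eqP => [->|_]; last exact: Hd.
have -> : A `+` (nth (mset0, 0) prems j).1 =
  ((nth mset0 Ss j `\ p) `+` (nth (mset0, 0) prems j).1) `+` T.
  by apply/msetP => a; rewrite /A !msetE2; mlia.
apply: IH; first by rewrite -Hs.
apply/msetP => a; rewrite !msetE2 msetnE; case: eqP => [->|_]; mlia.
Qed.

Lemma multicut X P S Ts q : derivable X (seq_mset P `+` S) q ->
  size Ts = size P ->
  (forall i, i < size P -> derivable X (nth mset0 Ts i) (nth 0 P i)) ->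
  derivable X (msum Ts `+` S) q.
Proof.
elim: P S Ts => [|p P IH] S [|T Ts] //=.
  move=> D _ _; have <- : seq_mset [::] = mset0 :> {mset atom}
     by apply/msetP => a; rewrite mset_seqE mset0E.
  exact: D.
move=> D [Hs] H.
have D1 : derivable X (seq_mset P `+` (S `+` T)) q.
  have := @cut X (seq_mset P `+` S) p T q.
  have -> : seq_mset P `+` (S `+` T) = seq_mset P `+` S `+` T.
    by apply/msetP => a; rewrite !msetE2; mlia.
  apply; last exact: (H 0).
  have <- : seq_mset (p :: P) `+` S = seq_mset P `+` S `+` [mset p] :> {mset atom}.
    by apply/msetP => a; rewrite !msetE2 !mset_seqE msetnE /= (eq_sym p a); case: (a == p) => /=; mlia.
  exact: D.
have := IH _ _ D1 Hs (fun i Hi => H i.+1 Hi).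
have -> : msum Ts `+` (S `+` T) = T `+` msum Ts `+` S.
  by apply/msetP => a; rewrite !msetE2; mlia.
done.
Qed.

Lemma msum_singl P : msum [seq [mset p] | p <- P] = seq_mset P :> {mset atom}.
Proof.
apply/msetP => a; rewrite msumE mset_seqE.
elim: P => [|p P IH] //=; rewrite IH msetnE eq_sym; by case: eqP.
Qed.

Theorem proposition2 (B : base) (P : seq atom) (S : mctx) (q : atom) :
  derivable B (seq_mset P `+` S) q <->
  (forall (X : base), base_ext X B ->
     forall (Ts : seq mctx), size Ts = size P ->
       (forall i, i < size P -> derivable X (nth mset0 Ts i) (nth 0 P i)) ->
       derivable X (msum Ts `+` S) q).
Proof.
split.
  move=> D X HX Ts Hs H; exact: (multicut _ _ _ _ _ (mono _ _ _ _ D HX) Hs H).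
move=> H; have := H B (fun r h => h) [seq [mset p] | p <- P].
rewrite msum_singl size_map; apply => // i Hi.
rewrite (nth_map 0) //; exact: der_ref.
Qed.
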